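(* Let $N$ be a tree rooted at $g$ with positive edge capacities $c_e$, and let $T$ be the tree obtained from $N$ by the procedure Create-Binary-Tree described in the context. Let $G_R$ be any request graph on $V\cup\{g\}$ with bandwidths $f_e$. Then $N$ and $T$ have the same set of leaves $L$, and for every embedding $\pi:V\to L$ (with $\pi(g)=g$), the congestion of $\pi$ as an embedding into $N$ equals the congestion of $\pi$ as an embedding into $T$. In particular, the minimum congestion of embedding $G_R$ into $N$ equals the minimum congestion of embedding $G_R$ into $T$.
   Context: Create-Binary-Tree$(N,g)$: for every node $v$ of $N$ with degree greater than $3$, let $u_1,\dots,u_d$ be the children of $v$ and $e_1,\dots,e_d$ the edges joining $v$ to $u_1,\dots,u_d$; replace $e_1,\dots,e_d$ by a (complete) binary tree rooted at $v$ whose leaves are $u_1,\dots,u_d$, where the new intermediate nodes are auxiliary (non-leaf) nodes; set the capacity of the edge from $u_i$ to its new parent equal to $c_{e_i}$, and the capacity of every other new edge equal to $\infty$. The request graph $G_R$ has vertex set $V\cup\{g\}$, $V=\{v_1,\dots,v_k\}$ virtual machines, edges $(v_i,g)$ or $(v_i,v_j)$ with bandwidths $f_e\ge0$. An embedding is an injective map $\pi:V\to L$ into the leaves, with $\pi(g)=g$. For a host tree $H$ and edge $e$ of $H$, $\mathrm{cong}(\pi,e)=\frac1{c_e}\sum f_{(u,v)}$ over request edges $(u,v)$ whose path in $H$ between $\pi(u)$ and $\pi(v)$ contains $e$ (an edge of capacity $\infty$ has congestion $0$); the congestion of $\pi$ is the maximum over edges of $H$. *)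

(* Defs.v *)
From mathcomp Require Import all_boot all_order all_algebra.
Set Implicit Arguments. Unset Strict Implicit. Unset Printing Implicit Defensive.
Import Order.TTheory GRing.Theory Num.Theory.
Local Open Scope ring_scope.

(* Host trees.  A host tree rooted at the gateway g is represented by the     *)
(* list of edges leaving the root g ("forest" below g).  Every edge is        *)
(* stored together with the subtree hanging below it, as a pair              *)
(*   (capacity, subtree),  capacity : option R,  None = infinite capacity.   *)
(* Non-root nodes are either labelled leaves [Leaf x] (servers, x : nat) or  *)
(* internal nodes [Node ch] with their list of child edges.                  *)
Inductive tree (R : Type) : Type :=
| Leaf of nat
| Node of seq (option R * tree R).
Arguments Leaf {R} _.
Arguments Node {R} _.

Definition forest (R : Type) := seq (option R * tree R).

Section Trees.
Variable R : realFieldType.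

Fixpoint leaves (t : tree R) : seq nat :=
  match t with
  | Leaf x => [:: x]
  | Node ch =>
      (fix lf (l : seq (option R * tree R)) : seq nat :=
         match l with [::] => [::] | (_, s) :: l' => leaves s ++ lf l' end) ch
  end.

Definition leavesF (H : forest R) : seq nat := flatten (map (fun e => leaves e.2) H).

Fixpoint edges (t : tree R) : seq (option R * tree R) :=
  match t with
  | Leaf _ => [::]
  | Node ch =>
      (fix ef (l : seq (option R * tree R)) : seq (option R * tree R) :=
         match l with [::] => [::] | e :: l' => e :: edges e.2 ++ ef l' end) ch
  end.

Definition edgesF (H : forest R) : seq (option R * tree R) :=
  flatten (map (fun e => e :: edges e.2) H).

Definition cap_pos (c : option R) : bool := if c is Some x then 0 < x else false.
Definition node_nonempty (t : tree R) : bool :=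
  if t is Node [::] then false else true.

(* N is a tree rooted at g with positive (finite) edge capacities, whose      *)
(* leaves (nodes of degree 1 other than g) are exactly the labelled [Leaf]s,  *)
(* labelled injectively.                                                      *)
Definition host_ok (N : forest R) : bool :=
  all (fun e => cap_pos e.1 && node_nonempty e.2) (edgesF N) && uniq (leavesF N).

(* [binitem xs y]: y = (capacity, subtree) is an edge whose lower part is a   *)
(* full binary tree of new auxiliary nodes whose leaves are the edges xs      *)
(* (in order); a single edge is kept with its own capacity c_{e_i}, every     *)
(* new edge between auxiliary nodes has capacity infinity (None).             *)
Inductive binitem : seq (option R * tree R) -> option R * tree R -> Prop :=
| bi_one x : binitem [:: x] x
| bi_split a b ia ib :
    binitem a ia -> binitem b ib -> binitem (a ++ b) (None, Node [:: ia; ib]).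

(* the edges xs from v to its children are replaced by a binary tree rooted   *)
(* at v: v gets exactly two child edges ys *)
Definition binchildren (xs ys : seq (option R * tree R)) : Prop :=
  exists a b ia ib, [/\ xs = a ++ b, binitem a ia, binitem b ib & ys = [:: ia; ib]].

(* degree of a node with child list ch: number of children, plus one for the  *)
(* parent edge unless the node is the root g *)
Definition node_degree (isroot : bool) (ch : seq (option R * tree R)) : nat :=
  (size ch + (~~ isroot))%N.

Definition cbt_kids (isroot : bool) (ch ch' : seq (option R * tree R)) : Prop :=
  if (3 < node_degree isroot ch)%N then binchildren ch ch' else ch' = ch.

Inductive cbt_tree : tree R -> tree R -> Prop :=
| cbt_leaf x : cbt_tree (Leaf x) (Leaf x)
| cbt_node ch ch' ch'' :
    cbt_list ch ch' -> cbt_kids false ch' ch'' -> cbt_tree (Node ch) (Node ch'')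
with cbt_list : seq (option R * tree R) -> seq (option R * tree R) -> Prop :=
| cbt_nil : cbt_list [::] [::]
| cbt_cons c t t' l l' :
    cbt_tree t t' -> cbt_list l l' -> cbt_list ((c, t) :: l) ((c, t') :: l').

Definition create_binary_tree (N T : forest R) : Prop :=
  exists N', cbt_list N N' /\ cbt_kids true N' T.

(* Request graph on V ∪ {g}, V = 'I_k (VM v_i = i), g = None.  Request edges *)
(* are pairs (v_i, w) with w = None (the edge (v_i,g)) or w = Some j (the     *)
(* edge (v_i,v_j)); f gives the bandwidths. *)
Definition request_ok k (E : seq ('I_k * option 'I_k)) (f : 'I_k * option 'I_k -> R)
  : Prop :=
  uniq E /\ (forall e, e \in E -> e.2 != Some e.1 /\ 0 <= f e).

Definition embedding (H : forest R) k (pi : 'I_k -> nat) : Prop :=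
  injective pi /\ (forall i, pi i \in leavesF H).

(* position of an endpoint in the host: pi(v_i) for v_i, g for g *)
Definition below k (pi : 'I_k -> nat) (S : tree R) (w : option 'I_k) : bool :=
  if w is Some i then pi i \in leaves S else false.

(* the edge e = (c, S) lies on the (unique) path between pi(u) and pi(w) iff *)
(* e is on exactly one of the two root paths, i.e. iff exactly one of the     *)
(* two endpoints lies below e *)
Definition on_path k (pi : 'I_k -> nat) (S : tree R) (u w : option 'I_k) : bool :=
  below pi S u != below pi S w.

Definition edge_cong k (E : seq ('I_k * option 'I_k)) (f : 'I_k * option 'I_k -> R)
  (pi : 'I_k -> nat) (e : option R * tree R) : R :=
  if e.1 is Some c then
    c^-1 * \sum_(r <- E | on_path pi e.2 (Some r.1) r.2) f r
  else 0.

Definition congestion (H : forest R) k (E : seq ('I_k * option 'I_k))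
  (f : 'I_k * option 'I_k -> R) (pi : 'I_k -> nat) : R :=
  \big[Num.max/0]_(e <- edgesF H) edge_cong E f pi e.

Definition min_congestion (H : forest R) k (E : seq ('I_k * option 'I_k))
  (f : 'I_k * option 'I_k -> R) (m : R) : Prop :=
  (exists pi, embedding H pi /\ congestion H E f pi = m) /\
  (forall pi, embedding H pi -> m <= congestion H E f pi).

End Trees.

(* Main.v *)
Require Import Defs.
From mathcomp Require Import all_boot all_order all_algebra.
Set Implicit Arguments. Unset Strict Implicit. Unset Printing Implicit Defensive.
Import Order.TTheory GRing.Theory Num.Theory.
Local Open Scope ring_scope.

Scheme cbt_tree_ind2 := Induction for cbt_tree Sort Prop
with cbt_list_ind2 := Induction for cbt_list Sort Prop.

Section Aux.
Variable R : realFieldType.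

Lemma leaves_Node (ch : seq (option R * tree R)) : leaves (Node ch) = leavesF ch.
Proof. by elim: ch => [|[c s] l IH] //=; congr (_ ++ _); exact: IH. Qed.

Lemma edges_Node (ch : seq (option R * tree R)) : edges (Node ch) = edgesF ch.
Proof. by elim: ch => [|[c s] l IH] //=; congr (_ :: (_ ++ _)); exact: IH. Qed.

Lemma leavesF_cat (a b : forest R) : leavesF (a ++ b) = leavesF a ++ leavesF b.
Proof. by rewrite /leavesF map_cat flatten_cat. Qed.

Lemma edgesF_cat (a b : forest R) : edgesF (a ++ b) = edgesF a ++ edgesF b.
Proof. by rewrite /edgesF map_cat flatten_cat. Qed.

Variable F : option R * tree R -> R.
Hypothesis hF0 : forall t, F (None, t) = 0.
Hypothesis hFs : forall c t t', leaves t =i leaves t' -> F (c, t) = F (c, t').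

Definition goodT (l l' : seq (option R * tree R)) :=
  {subset map F l' <= 0 :: map F l} /\ {subset map F l <= map F l'}.

Lemma goodT_refl l : goodT l l.
Proof. by split => x Hx //; rewrite inE Hx orbT. Qed.

Lemma goodT_trans l1 l2 l3 : goodT l1 l2 -> goodT l2 l3 -> goodT l1 l3.
Proof.
move=> [A B] [C D]; split => x Hx.
  move: (C x Hx); rewrite inE => /orP [/eqP->|H]; first by rewrite inE eqxx.
  exact: A.
by apply: D; apply: B.
Qed.

Lemma goodT_cat a b a' b' : goodT a a' -> goodT b b' -> goodT (a ++ b) (a' ++ b').
Proof.
move=> [A B] [C D]; split => x.
  rewrite map_cat mem_cat inE map_cat mem_cat => /orP [H|H];
    [move: (A x H)| move: (C x H)]; rewrite !inE => /orP [->|->];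
    by rewrite ?orbT.
by rewrite !map_cat !mem_cat => /orP [H|H]; [rewrite (B x H) | rewrite (D x H) orbT].
Qed.

Lemma goodT_cons c t t' l l' : leaves t' =i leaves t -> goodT l l' ->
  goodT ((c, t) :: l) ((c, t') :: l').
Proof.
move=> Hl [A B]; have E : F (c, t') = F (c, t) by apply: hFs.
split => x; rewrite /= !inE E.
  move=> /orP [->|H]; first by rewrite orbT.
  by move: (A x H); rewrite inE => /orP [->|->]; rewrite ?orbT.
by move=> /orP [->|H] //; rewrite (B x H) orbT.
Qed.

Lemma binitem_ok xs y : binitem xs y ->
  leaves y.2 =i leavesF xs /\ goodT (edgesF xs) (edgesF [:: y]).
Proof.
elim => [x|a b ia ib _ [La Ga] _ [Lb Gb]].
  split; last exact: goodT_refl.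
  by move=> z; rewrite /leavesF /= cats0.
split.
  move=> z; change ((z \in leaves (Node [:: ia; ib])) = (z \in leavesF (a ++ b))).
  by rewrite leaves_Node (leavesF_cat a b) !mem_cat (La z) (Lb z) in_nil orbF.
have -> : edgesF [:: (None, Node [:: ia; ib])] =
          (None, Node [:: ia; ib]) :: (edgesF [:: ia] ++ edgesF [:: ib]).
  transitivity ((None, Node [:: ia; ib]) :: edges (Node [:: ia; ib])).
    by rewrite /edgesF /= cats0.
  by rewrite edges_Node /edgesF /= !cats0.
rewrite edgesF_cat.
have [A B] := goodT_cat Ga Gb.
split => x.
  rewrite /= hF0 inE => /orP [/eqP->|H]; [by rewrite inE eqxx | exact: A].
by move=> H; rewrite /= inE (B x H) orbT.
Qed.

Lemma kids_ok b ch ch' : cbt_kids b ch ch' ->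
  leavesF ch' =i leavesF ch /\ goodT (edgesF ch) (edgesF ch').
Proof.
rewrite /cbt_kids; case: ifP => _; last first.
  by move=> ->; split => //; exact: goodT_refl.
move=> [a [c [ia [ib [-> Ha Hb ->]]]]].
have [La Ga] := binitem_ok Ha; have [Lb Gb] := binitem_ok Hb.
split.
  move=> z; rewrite [in RHS](leavesF_cat a c) [in RHS]mem_cat -(La z) -(Lb z).
  by rewrite /leavesF /= cats0 mem_cat.
rewrite (edgesF_cat a c).
have -> : edgesF [:: ia; ib] = edgesF [:: ia] ++ edgesF [:: ib].
  by rewrite /edgesF /= cats0 -catA.
exact: goodT_cat.
Qed.

Lemma cbt_ok :
  (forall t t', cbt_tree t t' -> leaves t' =i leaves t /\ goodT (edges t) (edges t')) /\
  (forall l l', cbt_list l l' -> leavesF l' =i leavesF l /\ goodT (edgesF l) (edgesF l')).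
Proof.
split.
- apply: (@cbt_tree_ind2 R
    (fun t t' _ => leaves t' =i leaves t /\ goodT (edges t) (edges t'))
    (fun l l' _ => leavesF l' =i leavesF l /\ goodT (edgesF l) (edgesF l'))).
  + by move=> x; split => //; exact: goodT_refl.
  + move=> ch ch' ch'' _ [L G] K; have [L2 G2] := kids_ok K.
    rewrite !leaves_Node !edges_Node; split; first by move=> z; rewrite L2 L.
    exact: goodT_trans G G2.
  + by split => //; exact: goodT_refl.
  + move=> c t t' l l' _ [Lt Gt] _ [Ll Gl]; split.
      by move=> z; rewrite /leavesF /= !mem_cat -/(leavesF l) -/(leavesF l') Lt Ll.
    rewrite /edgesF /= -/(edgesF l) -/(edgesF l').
    have := goodT_cons c Lt (goodT_cat Gt Gl); by [].
- apply: (@cbt_list_ind2 R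
    (fun t t' _ => leaves t' =i leaves t /\ goodT (edges t) (edges t'))
    (fun l l' _ => leavesF l' =i leavesF l /\ goodT (edgesF l) (edgesF l'))).
  + by move=> x; split => //; exact: goodT_refl.
  + move=> ch ch' ch'' _ [L G] K; have [L2 G2] := kids_ok K.
    rewrite !leaves_Node !edges_Node; split; first by move=> z; rewrite L2 L.
    exact: goodT_trans G G2.
  + by split => //; exact: goodT_refl.
  + move=> c t t' l l' _ [Lt Gt] _ [Ll Gl]; split.
      by move=> z; rewrite /leavesF /= !mem_cat -/(leavesF l) -/(leavesF l') Lt Ll.
    rewrite /edgesF /= -/(edgesF l) -/(edgesF l').
    have := goodT_cons c Lt (goodT_cat Gt Gl); by [].
Qed.

Lemma bigmax_le (s : seq (option R * tree R)) y :
  (\big[Num.max/0]_(e <- s) F e <= y) = (0 <= y) && all (fun x => x <= y) (map F s).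
Proof.
elim: s => [|e s IH]; first by rewrite big_nil andbT.
by rewrite big_cons /= ge_max IH andbCA.
Qed.

Lemma bigmax_eq s s' : goodT s s' ->
  \big[Num.max/0]_(e <- s) F e = \big[Num.max/0]_(e <- s') F e.
Proof.
move=> [A B].
have key : forall y, (\big[Num.max/0]_(e <- s) F e <= y) =
                     (\big[Num.max/0]_(e <- s') F e <= y).
  move=> y; rewrite !bigmax_le; case: (boolP (0 <= y)) => //= y0.
  apply/allP/allP => H x Hx.
    by move: (A x Hx); rewrite inE => /orP [/eqP->|/H].
  exact: H (B x Hx).
by apply/le_anti; rewrite key lexx -key lexx.
Qed.

End Aux.

Theorem lemma1 (R : realFieldType) (N T : forest R) :
  host_ok N -> create_binary_tree N T ->
  leavesF T =i leavesF N /\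
  (forall (k : nat) (E : seq ('I_k * option 'I_k)) (f : 'I_k * option 'I_k -> R),
     request_ok E f ->
     (forall pi : 'I_k -> nat, embedding N pi ->
        congestion N E f pi = congestion T E f pi) /\
     (forall m : R, min_congestion N E f m <-> min_congestion T E f m)).
Proof.
move=> _ [N' [HL HK]].
have z0 : forall t : tree R, (fun _ : option R * tree R => (0:R)) (None, t) = 0 by [].
have zs : forall c (t t' : tree R), leaves t =i leaves t' ->
  (fun _ : option R * tree R => (0:R)) (c, t) = (fun _ => 0) (c, t') by [].
have LT : leavesF T =i leavesF N.
  move=> z; rewrite ((@kids_ok R (fun _ => 0) z0 _ _ _ HK).1 z).
  exact: ((@cbt_ok R (fun _ => 0) z0 zs).2 _ _ HL).1 z.
split => // k E f _.
have CE : forall pi, congestion N E f pi = congestion T E f pi.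
  move=> pi; rewrite /congestion.
  set F := edge_cong E f pi.
  have hF0 : forall t, F (None, t) = 0 by [].
  have hFs : forall c t t', leaves t =i leaves t' -> F (c, t) = F (c, t').
    move=> [c|] t t' Ht //=; rewrite /F /edge_cong /=; congr (_ * _).
    apply: eq_bigl => r; by rewrite /on_path /below; case: r => /= a [i|];
      rewrite ?Ht.
  apply: bigmax_eq.
  exact: goodT_trans ((cbt_ok hF0 hFs).2 _ _ HL).2 (kids_ok hF0 HK).2.
have EE : forall pi, embedding N pi <-> embedding T pi.
  by move=> pi; split => -[H1 H2]; split => // i; rewrite ?LT // -LT.
split; first by move=> pi _; exact: CE.
move=> m; split => -[[pi [Hpi Hc]] Hmin]; split.
- by exists pi; split; [apply/EE | rewrite -CE].
- by move=> p /EE Hp; rewrite -CE; apply: Hmin.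
- by exists pi; split; [apply/EE | rewrite CE].
- by move=> p /EE Hp; rewrite CE; apply: Hmin.
Qed.
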